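(* Let $k$ be an infinite field of characteristic $0$. If $(L,V)\in\mathrm{Ob}\,\Xi^0$ is a cyclic free representation and $\Phi$ is an automorphism of the category $\Xi^0$, then $\Phi(L,V)$ is also a cyclic free representation.
   Context: Representations $(L,V)$: Lie algebra $L$ over $k$ and $L$-module $V$; homomorphisms $(\varphi,\psi)$ with $\varphi$ a Lie homomorphism, $\psi$ linear, $\varphi(l)\circ\psi(v)=\psi(l\circ v)$. $W(X,Y)=(L(X),A(X)Y)$ is the free representation ($L(X)$ free Lie algebra, $A(X)$ free unital associative algebra on $X$, $A(X)Y$ free $A(X)$-module with basis $Y$). With fixed countably infinite sets $X^0,Y^0$, $\Xi^0$ is the category whose objects are the $W(X,Y)$ with finite $X\subset X^0$, $Y\subset Y^0$ and whose morphisms are all homomorphisms between them. $W(X,Y)$ is called cyclic if $X=\{x\}$ and $Y=\{y\}$ are singletons. *)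

(* Defs.v *)
From HB Require Import structures.
From mathcomp Require Import all_boot all_order all_algebra.
From mathcomp Require Import finmap.
Set Implicit Arguments. Unset Strict Implicit. Unset Printing Implicit Defensive.
Import GRing.Theory.
Local Open Scope fset_scope.
Local Open Scope ring_scope.

Section FreeRep.
Variable k : fieldType.

(* Ambient type: noncommutative formal power series over k in the letters
   X^0 = nat; a word is a [seq nat].  A(X) is the subset of those with
   finite support and all letters in X. *)
Definition NC := seq nat -> k.
Definition nczero : NC := fun _ => 0.
Definition ncadd (f g : NC) : NC := fun w => f w + g w.
Definition ncscale (c : k) (f : NC) : NC := fun w => c * f w.
Definition ncmul (f g : NC) : NC :=
  fun w => \sum_(i < (size w).+1) f (take i w) * g (drop i w).
Definition ncX (x : nat) : NC := fun w => if w == [:: x] then 1 else 0.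
Definition ncbr (f g : NC) : NC := fun w => ncmul f g w - ncmul g f w.

Definition inA (X : {fset nat}) (f : NC) : Prop :=
  (exists n, forall w, (n < size w)%N -> f w = 0) /\
  (forall w, f w != 0 -> all (fun x => x \in X) w).

Inductive inL (X : {fset nat}) : NC -> Prop :=
| inL_zero : inL X nczero
| inL_gen x : x \in X -> inL X (ncX x)
| inL_add f g : inL X f -> inL X g -> inL X (ncadd f g)
| inL_scale c f : inL X f -> inL X (ncscale c f)
| inL_br f g : inL X f -> inL X g -> inL X (ncbr f g).

(* free A(X)-module A(X)Y with basis Y (Y^0 = nat): coordinate functions *)
Definition Vec := nat -> NC.
Definition vzero : Vec := fun _ => nczero.
Definition vadd (u v : Vec) : Vec := fun y => ncadd (u y) (v y).
Definition vscale (c : k) (v : Vec) : Vec := fun y => ncscale c (v y).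
Definition inM (X Y : {fset nat}) (v : Vec) : Prop :=
  (forall y, y \in Y -> inA X (v y)) /\ (forall y, y \notin Y -> v y = nczero).
Definition act (l : NC) (v : Vec) : Vec := fun y => ncmul l (v y).

(* objects of Xi^0: W(X,Y) with X, Y finite subsets of nat *)
Definition Obj := ({fset nat} * {fset nat})%type.

(* homomorphisms W(a) -> W(b); maps are normalized to be 0 outside the
   domain so that a homomorphism has a unique representative *)
Definition isHom (a b : Obj) (phi : NC -> NC) (psi : Vec -> Vec) : Prop :=
  [/\ (forall l, inL a.1 l -> inL b.1 (phi l)),
      (forall l, ~ inL a.1 l -> phi l = nczero),
      (forall c l m, inL a.1 l -> inL a.1 m ->
          phi (ncadd (ncscale c l) m) = ncadd (ncscale c (phi l)) (phi m)) &
      (forall l m, inL a.1 l -> inL a.1 m -> phi (ncbr l m) = ncbr (phi l) (phi m))] /\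
  [/\ (forall v, inM a.1 a.2 v -> inM b.1 b.2 (psi v)),
      (forall v, ~ inM a.1 a.2 v -> psi v = vzero),
      (forall c u v, inM a.1 a.2 u -> inM a.1 a.2 v ->
          psi (vadd (vscale c u) v) = vadd (vscale c (psi u)) (psi v)) &
      (forall l v, inL a.1 l -> inM a.1 a.2 v -> act (phi l) (psi v) = psi (act l v))].

Definition XiHom (a b : Obj) :=
  {p : ((NC -> NC) * (Vec -> Vec))%type | isHom a b p.1 p.2}.

Definition isComp (a b c : Obj) (f : XiHom a b) (g : XiHom b c) (h : XiHom a c) : Prop :=
  (forall l, (sval h).1 l = (sval g).1 ((sval f).1 l)) /\
  (forall v, (sval h).2 v = (sval g).2 ((sval f).2 v)).

Definition isId (a : Obj) (f : XiHom a a) : Prop :=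
  (forall l, inL a.1 l -> (sval f).1 l = l) /\
  (forall v, inM a.1 a.2 v -> (sval f).2 v = v).

Definition isCatAut (Fo : Obj -> Obj)
    (Fm : forall a b, XiHom a b -> XiHom (Fo a) (Fo b)) : Prop :=
  [/\ bijective Fo,
      (forall a b, bijective (Fm a b)),
      (forall a (f : XiHom a a), isId f -> isId (Fm _ _ f)) &
      (forall a b c (f : XiHom a b) (g : XiHom b c) (h : XiHom a c),
          isComp f g h -> isComp (Fm _ _ f) (Fm _ _ g) (Fm _ _ h))].

Definition cyclic (a : Obj) : Prop :=
  exists x y : nat, a.1 = [fset x] /\ a.2 = [fset y].

End FreeRep.

(* Main.v *)
Require Import Defs.
From mathcomp Require Import all_boot all_algebra finmap.
From Stdlib Require Import FunctionalExtensionality ProofIrrelevance ClassicalEpsilon Classical.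
From mathcomp Require Import zify.
Set Implicit Arguments. Unset Strict Implicit. Unset Printing Implicit Defensive.
Import GRing.Theory.
Local Open Scope ring_scope.

Lemma ncmul0r (k : fieldType) (g : NC k) : ncmul (nczero k) g = nczero k.
Proof. apply: functional_extensionality => w; rewrite /ncmul /nczero; apply: big1 => i _; exact: mul0r. Qed.

Lemma ncmulr0 (k : fieldType) (g : NC k) : ncmul g (nczero k) = nczero k.
Proof. apply: functional_extensionality => w; rewrite /ncmul /nczero; apply: big1 => i _; exact: mulr0. Qed.

Lemma ncmul_nil (k : fieldType) (f g : NC k) : ncmul f g [::] = f [::] * g [::].
Proof. by rewrite /ncmul big_ord1. Qed.

Lemma ncmulZl (k : fieldType) c (f g : NC k) : ncmul (ncscale c f) g = ncscale c (ncmul f g).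
Proof.
apply: functional_extensionality => w; rewrite /ncmul /ncscale mulr_sumr.
by apply: eq_bigr => i _; rewrite mulrA.
Qed.

Lemma ncmulZr (k : fieldType) c (f g : NC k) : ncmul f (ncscale c g) = ncscale c (ncmul f g).
Proof.
apply: functional_extensionality => w; rewrite /ncmul /ncscale mulr_sumr.
by apply: eq_bigr => i _; rewrite mulrCA.
Qed.

Lemma ncmulDl (k : fieldType) (f g h : NC k) : ncmul (ncadd f g) h = ncadd (ncmul f h) (ncmul g h).
Proof.
apply: functional_extensionality => w; rewrite /ncmul /ncadd -big_split /=.
by apply: eq_bigr => i _; rewrite mulrDl.
Qed.

Lemma ncmulDr (k : fieldType) (f g h : NC k) : ncmul h (ncadd f g) = ncadd (ncmul h f) (ncmul h g).
Proof.
apply: functional_extensionality => w; rewrite /ncmul /ncadd -big_split /=.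
by apply: eq_bigr => i _; rewrite mulrDr.
Qed.

Lemma ncadd0 (k : fieldType) (f : NC k) : ncadd f (nczero k) = f.
Proof. by apply: functional_extensionality => w; rewrite /ncadd /nczero addr0. Qed.

Lemma ncscale0 (k : fieldType) c : ncscale c (nczero k) = nczero k.
Proof. by apply: functional_extensionality => w; rewrite /ncscale /nczero mulr0. Qed.

Lemma inL_nil (k : fieldType) X (l : NC k) : inL X l -> l [::] = 0.
Proof.
move=> H; elim: H.
- by [].
- by move=> x _; rewrite /ncX.
- by move=> f g _ Hf _ Hg; rewrite /ncadd Hf Hg addr0.
- by move=> c f _ Hf; rewrite /ncscale Hf mulr0.
- by move=> f g _ Hf _ Hg; rewrite /ncbr !ncmul_nil Hf Hg mul0r subrr.
Qed.

Lemma inA_out (k : fieldType) X (f : NC k) w :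
  inA X f -> ~~ all (fun x => x \in X) w -> f w = 0.
Proof. move=> [_ H] Hw; apply/eqP; apply: contraNT Hw; exact: H. Qed.

Lemma inA0 (k : fieldType) X : inA X (nczero k).
Proof. split; first by exists 0%N. by rewrite /nczero => w; rewrite eqxx. Qed.

Lemma inA_lin (k : fieldType) X c (f g : NC k) :
  inA X f -> inA X g -> inA X (ncadd (ncscale c f) g).
Proof.
move=> Hf Hg; split.
  case: Hf => [[n1 H1] _]; case: Hg => [[n2 H2] _].
  exists (maxn n1 n2) => w Hw; rewrite /ncadd /ncscale H1 ?H2 ?mulr0 ?addr0 //; lia.
move=> w Hw; apply/negPn/negP => Hn; move: Hw.
by rewrite /ncadd /ncscale (inA_out Hf Hn) (inA_out Hg Hn) mulr0 addr0 eqxx.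
Qed.

Lemma inA_mul (k : fieldType) X (f g : NC k) :
  inA X f -> inA X g -> inA X (ncmul f g).
Proof.
move=> Hf Hg; split.
  case: Hf => [[n1 H1] _]; case: Hg => [[n2 H2] _].
  exists (n1 + n2)%N => w Hw; rewrite /ncmul; apply: big1 => i _.
  have Hs : (size (take i w) + size (drop i w) = size w)%N by rewrite -size_cat cat_take_drop.
  case: (leqP (size (take i w)) n1) => h.
    by rewrite (H2 (drop i w)) ?mulr0 //; lia.
  by rewrite H1 ?mul0r.
move=> w Hw; apply/negPn/negP => Hn; move: Hw; rewrite /ncmul big1 ?eqxx //.
move=> i _.
case Ht: (all (fun x => x \in X) (take i w)).
  case Hd: (all (fun x => x \in X) (drop i w)).
    have : all (fun x => x \in X) (take i w ++ drop i w) by rewrite all_cat Ht Hd.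
    by rewrite cat_take_drop (negbTE Hn).
  by rewrite (inA_out Hg) ?Hd // mulr0.
by rewrite (inA_out Hf) ?Ht // mul0r.
Qed.

Lemma inL_inA (k : fieldType) X (l : NC k) : inL X l -> inA X l.
Proof.
move=> H; elim: H.
- exact: inA0.
- move=> x Hx; split; first by exists 1%N => w Hw; rewrite /ncX; case: eqP Hw => // -> //.
  move=> w; rewrite /ncX; case: ifP => [/eqP -> _ /=|_]; first by rewrite Hx.
  by rewrite eqxx.
- move=> f g _ Hf _ Hg; have := inA_lin 1 Hf Hg.
  have -> : ncscale 1 f = f by apply: functional_extensionality => w; rewrite /ncscale mul1r.
  by [].
- move=> c f _ Hf; have := inA_lin c Hf (inA0 k X); by rewrite ncadd0.
- move=> f g _ Hf _ Hg; have := inA_lin (-1) (inA_mul Hg Hf) (inA_mul Hf Hg).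
  have -> : ncadd (ncscale (-1) (ncmul g f)) (ncmul f g) = ncbr f g.
    by apply: functional_extensionality => w; rewrite /ncadd /ncscale /ncbr mulN1r addrC.
  by [].
Qed.

Definition pif (P : Prop) (T : Type) (u v : T) : T :=
  if excluded_middle_informative P then u else v.
Lemma pifT (P : Prop) T (u v : T) : P -> pif P u v = u.
Proof. by rewrite /pif; case: excluded_middle_informative. Qed.
Lemma pifF (P : Prop) T (u v : T) : ~ P -> pif P u v = v.
Proof. by rewrite /pif; case: excluded_middle_informative. Qed.

Definition ncone (k : fieldType) : NC k := fun w => if w == [::] then 1 else 0.
Definition ev (k : fieldType) (y : nat) : Vec k :=
  fun y' => if y' == y then ncone k else nczero k.

Lemma inA_one (k : fieldType) X : inA X (ncone k).
Proof.
split; first by exists 0%N => w; rewrite /ncone; case: w.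
by move=> w; rewrite /ncone; case: w => [|a w] //=; rewrite eqxx.
Qed.

Lemma inA_scale (k : fieldType) X c (f : NC k) : inA X f -> inA X (ncscale c f).
Proof. move=> Hf; have := inA_lin c Hf (inA0 k X); by rewrite ncadd0. Qed.

Lemma inM0 (k : fieldType) X Y : inM X Y (vzero k).
Proof. split=> y _ //; exact: inA0. Qed.

Lemma inM_lin (k : fieldType) X Y c (u v : Vec k) :
  inM X Y u -> inM X Y v -> inM X Y (vadd (vscale c u) v).
Proof.
move=> [Hu1 Hu2] [Hv1 Hv2]; split=> y Hy.
  exact: inA_lin (Hu1 y Hy) (Hv1 y Hy).
by rewrite /vadd /vscale Hu2 // Hv2 // ncscale0 ncadd0.
Qed.

Lemma inM_act (k : fieldType) X Y (l : NC k) v :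
  inL X l -> inM X Y v -> inM X Y (act l v).
Proof.
move=> Hl [Hv1 Hv2]; split=> y Hy; rewrite /act.
  exact: inA_mul (inL_inA Hl) (Hv1 y Hy).
by rewrite Hv2 // ncmulr0.
Qed.

Lemma inM_ev (k : fieldType) X Y y : y \in Y -> inM X Y (ev k y).
Proof.
move=> Hy; split=> y' Hy'; rewrite /ev; case: ifP => // /eqP E.
- exact: inA_one.
- exact: inA0.
- by move: Hy'; rewrite E Hy.
Qed.

Lemma inL_empty (k : fieldType) (l : NC k) : inL fset0 l -> l = nczero k.
Proof.
move=> H; elim: H => //.
- by move=> f g _ -> _ ->; rewrite ncadd0.
- by move=> c f _ ->; rewrite ncscale0.
- move=> f g _ -> _ ->; rewrite /ncbr ncmul0r.
  by apply: functional_extensionality => w; rewrite subrr.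
Qed.

Lemma inM_emptyY (k : fieldType) X (v : Vec k) : inM X fset0 v -> v = vzero k.
Proof. move=> [_ H]; apply: functional_extensionality => y; exact: H. Qed.


Lemma dbl0 (k : fieldType) (x : k) : x = x + x -> x = 0.
Proof. by move=> h; apply: (@addrI _ x); rewrite addr0 -h. Qed.

Lemma hom_phi0 (k : fieldType) a b (f : XiHom k a b) : (sval f).1 (nczero k) = nczero k.
Proof.
case: (svalP f) => [[_ _ Hlin _] _].
have := Hlin 1 (nczero k) (nczero k) (inL_zero _ _) (inL_zero _ _).
rewrite ncscale0 ncadd0 => E.
apply: functional_extensionality => w; apply: dbl0.
by have := congr1 (fun h => h w) E; rewrite /ncadd /ncscale mul1r.
Qed.

Lemma hom_psi0 (k : fieldType) a b (f : XiHom k a b) : (sval f).2 (vzero k) = vzero k.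
Proof.
case: (svalP f) => [_ [_ _ Hlin _]].
have := Hlin 1 (vzero k) (vzero k) (inM0 _ _ _) (inM0 _ _ _).
have -> : vadd (vscale 1 (vzero k)) (vzero k) = vzero k.
  by apply: functional_extensionality => y; rewrite /vadd /vscale /vzero ncscale0 ncadd0.
move=> E; apply: functional_extensionality => y; apply: functional_extensionality => w.
apply: dbl0.
by have := congr1 (fun h => h y w) E; rewrite /vadd /ncadd /vscale /ncscale mul1r.
Qed.

Lemma hom_phiZ (k : fieldType) a b (f : XiHom k a b) c l :
  inL a.1 l -> (sval f).1 (ncscale c l) = ncscale c ((sval f).1 l).
Proof.
move=> Hl; case: (svalP f) => [[_ _ Hlin _] _].
by have := Hlin c l (nczero k) Hl (inL_zero _ _); rewrite !ncadd0 hom_phi0 ncadd0.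
Qed.

Lemma hom_eq (k : fieldType) a b (f g : XiHom k a b) : sval f = sval g -> f = g.
Proof.
case: f => p Hp; case: g => q Hq /= E; subst q; f_equal; exact: proof_irrelevance.
Qed.

Definition triv (k : fieldType) a b := forall f g : XiHom k a b, f = g.

Lemma triv_crit (k : fieldType) (a b : Obj) :
  (a.1 = fset0 \/ b.1 = fset0) -> (a.2 = fset0 \/ b.2 = fset0) -> triv k a b.
Proof.
move=> HX HY.
suff H : forall f : XiHom k a b, sval f = (fun _ => nczero k, fun _ => vzero k).
  by move=> f g; apply: hom_eq; rewrite !H.
move=> f; case: (svalP f) => [[HL Hn _ _] [HM Hmn _ _]].
rewrite [sval f]surjective_pairing; congr pair.
  apply: functional_extensionality => l.
  case: (classic (inL a.1 l)) => Hl; last exact: Hn.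
  case: HX => E.
    by rewrite E in Hl; rewrite (inL_empty Hl) hom_phi0.
  by have := HL l Hl; rewrite E; apply: inL_empty.
apply: functional_extensionality => v.
case: (classic (inM a.1 a.2 v)) => Hv; last exact: Hmn.
case: HY => E.
  by rewrite E in Hv; rewrite (inM_emptyY Hv) hom_psi0.
by have := HM v Hv; rewrite E; apply: inM_emptyY.
Qed.

Lemma ncmul_one (k : fieldType) (f g : NC k) x :
  ncmul f g [:: x] = f [::] * g [:: x] + f [:: x] * g [::].
Proof. by rewrite /ncmul big_ord_recr big_ord1 /=. Qed.

Lemma ncbr_one (k : fieldType) (f g : NC k) x : ncbr f g [:: x] = 0.
Proof.
rewrite /ncbr /= !ncmul_one.
rewrite [g [::] * _]mulrC [g [:: x] * _]mulrC [X in _ - X]addrC.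
by rewrite subrr.
Qed.

Lemma ncbr_scale (k : fieldType) (c d : k) (h : NC k) :
  ncbr (ncscale c h) (ncscale d h) = nczero k.
Proof.
rewrite /ncbr !ncmulZl !ncmulZr; apply: functional_extensionality => w.
by rewrite /ncscale /nczero mulrCA subrr.
Qed.

Lemma zhom_isHom (k : fieldType) (a b : Obj) :
  isHom a b (fun _ => nczero k) (fun _ => vzero k).
Proof.
split; split => //.
- by move=> *; exact: inL_zero.
- by move=> c l m _ _; rewrite ncscale0 ncadd0.
- by move=> l m _ _; rewrite /ncbr ncmul0r; apply: functional_extensionality => w; rewrite /nczero subrr.
- by move=> *; exact: inM0.
- move=> c u v _ _; apply: functional_extensionality => y.
  by rewrite /vadd /vscale /vzero ncscale0 ncadd0.
- by move=> l v _ _; apply: functional_extensionality => y; rewrite /act /vzero ncmulr0.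
Qed.

Definition zhom (k : fieldType) a b : XiHom k a b :=
  exist (fun p => isHom a b p.1 p.2) (_, _) (zhom_isHom k a b).

Definition linphi (k : fieldType) (X : {fset nat}) (x0 x1 : nat) (l : NC k) : NC k :=
  pif (inL X l) (ncscale (l [:: x0]) (ncX k x1)) (nczero k).

Lemma linhom_isHom (k : fieldType) (a b : Obj) x0 x1 : x1 \in b.1 ->
  isHom a b (linphi a.1 x0 x1) (fun _ => vzero k).
Proof.
move=> Hx1; split; split => //.
- move=> l Hl; rewrite /linphi pifT //; apply: inL_scale; exact: inL_gen.
- by move=> l Hl; rewrite /linphi pifF.
- move=> c l m Hl Hm; rewrite /linphi !pifT //; last by apply: inL_add => //; exact: inL_scale.
  by apply: functional_extensionality => w; rewrite /ncadd /ncscale mulrDl mulrA.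
- move=> l m Hl Hm; rewrite /linphi !pifT //; last exact: inL_br.
  rewrite ncbr_scale ncbr_one; apply: functional_extensionality => w.
  by rewrite /ncscale /nczero mul0r.
- by move=> *; exact: inM0.
- move=> c u v _ _; apply: functional_extensionality => y.
  by rewrite /vadd /vscale /vzero ncscale0 ncadd0.
- by move=> l v _ _; apply: functional_extensionality => y; rewrite /act /vzero ncmulr0.
Qed.

Lemma nontriv_X (k : fieldType) (a b : Obj) x0 x1 :
  x0 \in a.1 -> x1 \in b.1 -> ~ triv k a b.
Proof.
move=> Hx0 Hx1 Ht.
have := Ht (zhom k a b) (exist (fun p => isHom a b p.1 p.2) (_, _) (@linhom_isHom k a b x0 x1 Hx1)).
move/(congr1 (fun f => (sval f).1 (ncX k x0) [:: x1])) => /=.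
rewrite /linphi pifT; last exact: inL_gen.
by rewrite /ncscale /ncX /nczero !eqxx mul1r => /eqP; rewrite eq_sym oner_eq0.
Qed.

Definition ctpsi (k : fieldType) (X Y : {fset nat}) (y0 y1 : nat) (v : Vec k) : Vec k :=
  pif (inM X Y v)
    (fun y => if y == y1 then ncscale (v y0 [::]) (ncone k) else nczero k) (vzero k).

Lemma cthom_isHom (k : fieldType) (a b : Obj) y0 y1 : y1 \in b.2 ->
  isHom a b (fun _ => nczero k) (ctpsi a.1 a.2 y0 y1).
Proof.
move=> Hy1; split; split => //.
- by move=> *; exact: inL_zero.
- by move=> c l m _ _; rewrite ncscale0 ncadd0.
- by move=> l m _ _; rewrite /ncbr ncmul0r; apply: functional_extensionality => w; rewrite /nczero subrr.
- move=> v Hv; rewrite /ctpsi pifT //; split=> y Hy; case: ifP => // /eqP E.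
  + exact/inA_scale/inA_one.
  + exact: inA0.
  + by move: Hy; rewrite E Hy1.
- by move=> v Hv; rewrite /ctpsi pifF.
- move=> c u v Hu Hv; rewrite /ctpsi !pifT //; last exact: inM_lin.
  apply: functional_extensionality => y; rewrite /vadd /vscale /=.
  case: ifP => _; last by rewrite ncscale0 ncadd0.
  by apply: functional_extensionality => w; rewrite /ncadd /ncscale mulrDl mulrA.
- move=> l v Hl Hv; rewrite /ctpsi !pifT //; last exact: inM_act.
  apply: functional_extensionality => y; rewrite /act /= ncmul0r.
  rewrite ncmul_nil (inL_nil Hl) mul0r.
  by case: (y == y1) => //; apply: functional_extensionality => w; rewrite /ncscale /nczero mul0r.
Qed.

Lemma nontriv_Y (k : fieldType) (a b : Obj) y0 y1 :
  y0 \in a.2 -> y1 \in b.2 -> ~ triv k a b.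
Proof.
move=> Hy0 Hy1 Ht.
have := Ht (zhom k a b) (exist (fun p => isHom a b p.1 p.2) (_, _) (@cthom_isHom k a b y0 y1 Hy1)).
move/(congr1 (fun f => (sval f).2 (ev k y0) y1 [::])) => /=.
rewrite /ctpsi pifT; last exact: inM_ev.
by rewrite /ncscale /ev /ncone /vzero /nczero !eqxx mul1r => /eqP; rewrite eq_sym oner_eq0.
Qed.

Definition ren (k : fieldType) (a b : nat) (f : NC k) : NC k :=
  fun w => if all (pred1 b) w then f (nseq (size w) a) else 0.

Lemma ren_lin (k : fieldType) a b c (f g : NC k) :
  ren a b (ncadd (ncscale c f) g) = ncadd (ncscale c (ren a b f)) (ren a b g).
Proof.
apply: functional_extensionality => w; rewrite /ren /ncadd /ncscale.
by case: ifP => _; rewrite ?mulr0 ?addr0.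
Qed.

Lemma ren0 (k : fieldType) a b : ren a b (nczero k) = nczero k.
Proof. by apply: functional_extensionality => w; rewrite /ren /nczero; case: ifP. Qed.

Lemma all_take_drop (T : eqType) (P : pred T) i (w : seq T) :
  all P w -> all P (take i w) && all P (drop i w).
Proof. by move=> H; rewrite -all_cat cat_take_drop. Qed.

Lemma ren_mul (k : fieldType) a b (f g : NC k) :
  ren a b (ncmul f g) = ncmul (ren a b f) (ren a b g).
Proof.
apply: functional_extensionality => w; rewrite /ren /ncmul.
case: ifP => Hw.
  rewrite size_nseq; apply: eq_bigr => i _.
  have Hi : (i <= size w)%N by rewrite -ltnS ltn_ord.
  case/andP: (all_take_drop i Hw) => -> ->.
  by rewrite take_nseq // drop_nseq size_takel // size_drop.
apply/esym/big1 => i _.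
case Ht: (all (pred1 b) (take i w)); last by rewrite mul0r.
case Hd: (all (pred1 b) (drop i w)); last by rewrite mulr0.
have : all (pred1 b) (take i w ++ drop i w) by rewrite all_cat Ht Hd.
by rewrite cat_take_drop Hw.
Qed.

Lemma ren_br (k : fieldType) a b (f g : NC k) :
  ren a b (ncbr f g) = ncbr (ren a b f) (ren a b g).
Proof.
rewrite /ncbr -!ren_mul; apply: functional_extensionality => w; rewrite /ren.
by case: ifP; rewrite ?subrr.
Qed.

Lemma ren_X (k : fieldType) a b z :
  ren a b (ncX k z) = if z == a then ncX k b else nczero k.
Proof.
apply: functional_extensionality => w; rewrite /ren /ncX /nczero.
case: (eqVneq z a) => [->|Hza] /=; case: w => [|c [|d w]] //=;
  rewrite ?eqseq_cons ?andbT ?eqxx //.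
all: have E : forall (x : nat) s, (x :: s == [::]) = false by [].
all: rewrite ?E ?andbF ?if_same ?[a == z]eq_sym ?(negbTE Hza) //=.
all: by case: ifP.
Qed.

Lemma ren_inL (k : fieldType) (X X' : {fset nat}) a b (f : NC k) :
  b \in X' -> inL X f -> inL X' (ren a b f).
Proof.
move=> Hb H; elim: H.
- by rewrite ren0; exact: inL_zero.
- move=> x _; rewrite ren_X; case: ifP => _; [exact: inL_gen | exact: inL_zero].
- move=> f1 g1 _ H1 _ H2.
  have -> : ncadd f1 g1 = ncadd (ncscale 1 f1) g1.
    by apply: functional_extensionality => w; rewrite /ncadd /ncscale mul1r.
  rewrite ren_lin.
  have -> : ncscale 1 (ren a b f1) = ren a b f1.
    by apply: functional_extensionality => w; rewrite /ncscale mul1r.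
  exact: inL_add.
- move=> c f1 _ H1.
  have := ren_lin a b c f1 (nczero k); rewrite !ncadd0 ren0 ncadd0 => ->.
  exact: inL_scale.
- move=> f1 g1 _ H1 _ H2; rewrite ren_br; exact: inL_br.
Qed.

Lemma ren_inA (k : fieldType) (X X' : {fset nat}) a b (f : NC k) :
  b \in X' -> inA X f -> inA X' (ren a b f).
Proof.
move=> Hb [[n Hn] _]; split.
  by exists n => w Hw; rewrite /ren; case: ifP => // _; rewrite Hn // size_nseq.
move=> w; rewrite /ren; case: ifP => [Hw _|_]; last by rewrite eqxx.
by apply/allP => z Hz; have /eqP -> := allP Hw z Hz.
Qed.

Lemma ren_ren (k : fieldType) a b (f : NC k) :
  inA [fset a]%fset f -> ren b a (ren a b f) = f.
Proof.
move=> Hf; apply: functional_extensionality => w; rewrite /ren.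
rewrite all_nseq /= eqxx orbT size_nseq.
case: ifP => Hw.
  by move/all_pred1P: Hw => <-.
apply/esym/(inA_out Hf); apply: contraFN Hw => /allP H.
by apply/allP => z /H; rewrite in_fset1.
Qed.

Lemma inM_inA (k : fieldType) X Y (v : Vec k) y : inM X Y v -> inA X (v y).
Proof.
move=> [H1 H2]; case: (boolP (y \in Y)) => Hy; first exact: H1.
rewrite H2 //; exact: inA0.
Qed.

Definition rphi (k : fieldType) (A : {fset nat}) a b (l : NC k) : NC k :=
  pif (inL A l) (ren a b l) (nczero k).
Definition rpsi (k : fieldType) (A B : {fset nat}) a b ys yd (v : Vec k) : Vec k :=
  pif (inM A B v) (fun y' => if y' == yd then ren a b (v ys) else nczero k) (vzero k).

Lemma rhom_isHom (k : fieldType) (src tgt : Obj) a b ys yd :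
  b \in tgt.1 -> yd \in tgt.2 ->
  isHom src tgt (@rphi k src.1 a b) (@rpsi k src.1 src.2 a b ys yd).
Proof.
move=> Hb Hyd; split; split.
- move=> l Hl; rewrite /rphi pifT //; exact: (ren_inL a Hb Hl).
- by move=> l Hl; rewrite /rphi pifF.
- move=> c l m Hl Hm; rewrite /rphi !pifT //; last by apply: inL_add => //; exact: inL_scale.
  exact: ren_lin.
- move=> l m Hl Hm; rewrite /rphi !pifT //; last exact: inL_br.
  exact: ren_br.
- move=> v Hv; rewrite /rpsi pifT //; split=> y Hy; case: ifP => // /eqP E.
  + exact: ren_inA (inM_inA _ Hv).
  + exact: inA0.
  + by move: Hy; rewrite E Hyd.
- by move=> v Hv; rewrite /rpsi pifF.
- move=> c u v Hu Hv; rewrite /rpsi !pifT //; last exact: inM_lin.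
  apply: functional_extensionality => y; rewrite /vadd /vscale /=.
  case: ifP => _; last by rewrite ncscale0 ncadd0.
  exact: ren_lin.
- move=> l v Hl Hv; rewrite /rpsi /rphi !pifT //; last exact: inM_act.
  apply: functional_extensionality => y; rewrite /act /=.
  case: ifP => _; last by rewrite ncmulr0.
  by rewrite ren_mul.
Qed.

Lemma comp_isHom (k : fieldType) a b c (f : XiHom k a b) (g : XiHom k b c) :
  isHom a c (fun l => (sval g).1 ((sval f).1 l)) (fun v => (sval g).2 ((sval f).2 v)).
Proof.
case: (svalP f) => [[HL Hn Hlin Hbr] [HM Hmn Hmlin Hact]].
case: (svalP g) => [[HL' Hn' Hlin' Hbr'] [HM' Hmn' Hmlin' Hact']].
split; split.
- by move=> l Hl; apply: HL'; apply: HL.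
- by move=> l Hl; rewrite Hn // hom_phi0.
- by move=> c0 l m Hl Hm; rewrite Hlin // Hlin' //; apply: HL.
- by move=> l m Hl Hm; rewrite Hbr // Hbr' //; apply: HL.
- by move=> v Hv; apply: HM'; apply: HM.
- by move=> v Hv; rewrite Hmn // hom_psi0.
- by move=> c0 u v Hu Hv; rewrite Hmlin // Hmlin' //; apply: HM.
- by move=> l v Hl Hv; rewrite Hact' ?Hact //; [apply: HL | apply: HM].
Qed.

Definition comp (k : fieldType) a b c (f : XiHom k a b) (g : XiHom k b c) : XiHom k a c :=
  exist (fun p => isHom a c p.1 p.2) (_, _) (comp_isHom f g).

Lemma comp_isComp (k : fieldType) a b c (f : XiHom k a b) (g : XiHom k b c) :
  isComp f g (comp f g).
Proof. by split. Qed.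

Definition retract (k : fieldType) a b :=
  exists (s : XiHom k a b) (r : XiHom k b a) (h : XiHom k a a), isComp s r h /\ isId h.

Lemma cyc_retract (k : fieldType) (a b : Obj) x y x0 y0 :
  a.1 = [fset x]%fset -> a.2 = [fset y]%fset -> x0 \in b.1 -> y0 \in b.2 -> retract k a b.
Proof.
move=> Ha1 Ha2 Hx0 Hy0.
have Hx : x \in a.1 by rewrite Ha1 in_fset1.
have Hy : y \in a.2 by rewrite Ha2 in_fset1.
pose s := exist (fun p => isHom a b p.1 p.2) (_, _) (@rhom_isHom k a b x x0 y y0 Hx0 Hy0).
pose r := exist (fun p => isHom b a p.1 p.2) (_, _) (@rhom_isHom k b a x0 x y0 y Hx Hy).
exists s, r, (comp s r); split; first exact: comp_isComp.
split.
- move=> l Hl /=; have H1 := ren_inL x Hx0 Hl.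
  rewrite /rphi pifT // pifT //.
  by rewrite ren_ren // -Ha1; apply: inL_inA.
- move=> v Hv /=.
  have Hsv : inM b.1 b.2 ((sval s).2 v).
    by case: (svalP s) => _ [HM _ _ _]; exact: HM.
  rewrite /= in Hsv.
  rewrite {1}/rpsi pifT //.
  apply: functional_extensionality => y'.
  rewrite /rpsi pifT // eqxx.
  case: ifP => [/eqP ->|Hy'].
    by rewrite ren_ren // -Ha1; apply: inM_inA Hv.
  case: Hv => _ Hv2; rewrite Hv2 // Ha2 in_fset1 Hy' //.
Qed.

Lemma inL_single (k : fieldType) x (f : NC k) :
  inL [fset x]%fset f -> exists c, f = ncscale c (ncX k x).
Proof.
move=> H; elim: H.
- exists 0; apply: functional_extensionality => w; by rewrite /ncscale /nczero mul0r.
- move=> z; rewrite in_fset1 => /eqP ->; exists 1.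
  by apply: functional_extensionality => w; rewrite /ncscale mul1r.
- move=> f1 g1 _ [c1 ->] _ [c2 ->]; exists (c1 + c2).
  by apply: functional_extensionality => w; rewrite /ncadd /ncscale mulrDl.
- move=> c f1 _ [c1 ->]; exists (c * c1).
  by apply: functional_extensionality => w; rewrite /ncscale mulrA.
- move=> f1 g1 _ [c1 ->] _ [c2 ->]; exists 0; rewrite ncbr_scale.
  by apply: functional_extensionality => w; rewrite /ncscale /nczero mul0r.
Qed.

Lemma retract_X (k : fieldType) (a' c : Obj) x :
  c.1 = [fset x]%fset -> retract k a' c ->
  forall x1 x2, x1 \in a'.1 -> x2 \in a'.1 -> x1 = x2.
Proof.
move=> Hc1 [s [r [h [[Hcomp _] [Hid _]]]]] x1 x2 H1 H2.
case: (svalP s) => [[HLs _ _ _] _].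
have Xc : inL c.1 (ncX k x) by apply: inL_gen; rewrite Hc1 in_fset1.
have E : forall z, z \in a'.1 -> exists cz, ncX k z = ncscale cz ((sval r).1 (ncX k x)).
  move=> z Hz; have Hz' : inL a'.1 (ncX k z) by apply: inL_gen.
  have := HLs _ Hz'; rewrite Hc1 => /inL_single [cz Ecz].
  exists cz; rewrite -[ncX k z](Hid _ Hz') Hcomp Ecz hom_phiZ //.
apply/eqP; apply/negPn/negP => Hne.
case: (E x1 H1) => c1 E1; case: (E x2 H2) => c2 E2.
set u := (sval r).1 (ncX k x) in E1 E2.
have e1 := congr1 (fun f => f [:: x1]) E1.
have e2 := congr1 (fun f => f [:: x1]) E2.
have e3 := congr1 (fun f => f [:: x2]) E2.
move: e1 e2 e3; rewrite /ncX /ncscale /= !eqseq_cons !andbT !eqxx (negbTE Hne).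
move=> e1 /esym /eqP; rewrite mulf_eq0 => /orP [/eqP c20|/eqP u0].
  by rewrite c20 mul0r => /eqP; rewrite oner_eq0.
by move: e1; rewrite u0 mulr0 => /eqP; rewrite oner_eq0.
Qed.

Lemma ncmul_X_nil (k : fieldType) x (g : NC k) : ncmul (ncX k x) g [::] = 0.
Proof. by rewrite ncmul_nil /ncX /= mul0r. Qed.

Lemma ncmul_X_cons (k : fieldType) x (g : NC k) a u :
  ncmul (ncX k x) g (a :: u) = if a == x then g u else 0.
Proof.
rewrite /ncmul big_ord_recl big_ord_recl /= /ncX /= mul0r add0r.
rewrite !add0n take0 drop0 eqseq_cons eqxx andbT.
rewrite big1 ?addr0; first by case: ifP; rewrite ?mul1r ?mul0r.
move=> i _; rewrite eqseq_cons.
have Hi : (bump 0 i <= size u)%N by rewrite /bump leq0n add1n; exact: ltn_ord.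
case: ifP; last by rewrite mul0r.
by move/andP => [_ /eqP /(congr1 size)]; rewrite size_takel //= /bump /=.
Qed.

Lemma retract_key (k : fieldType) (a' c : Obj) x y (r : XiHom k c a') :
  c.1 = [fset x]%fset -> c.2 = [fset y]%fset ->
  forall v, inM c.1 c.2 v -> forall y',
    (sval r).2 v y' [::] = v y [::] * (sval r).2 (ev k y) y' [::].
Proof.
move=> Hc1 Hc2 v Hv y'.
case: (svalP r) => [[HL _ _ _] [_ _ Hmlin Hact]].
have Hy : y \in c.2 by rewrite Hc2 in_fset1.
have Xc : inL c.1 (ncX k x) by apply: inL_gen; rewrite Hc1 in_fset1.
pose v' : Vec k := fun y'' => if y'' == y then (fun u => v y (x :: u)) else nczero k.
have Hv' : inM c.1 c.2 v'.
  split=> y'' Hy''; rewrite /v'; case: ifP => [/eqP E|_] //.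
  - have [[n Hn] Hl] := inM_inA y Hv; split.
      by exists n => w Hw; apply: Hn => /=; lia.
    by move=> w /Hl /= /andP [].
  - exact: inA0.
  - by move: Hy''; rewrite E Hy.
have Dec : v = vadd (vscale (v y [::]) (ev k y)) (act (ncX k x) v').
  apply: functional_extensionality => y''; apply: functional_extensionality => w.
  rewrite /vadd /vscale /act /ncadd /ncscale /ev /v'.
  case: (eqVneq y'' y) => [->|Hne].
    case: w => [|a u].
      by rewrite ncmul_X_nil /ncone eqxx mulr1 addr0.
    rewrite ncmul_X_cons /ncone /= mulr0 add0r.
    case: (eqVneq a x) => [->//|Hax].
    apply: (inA_out (inM_inA y Hv)); rewrite Hc1 /= in_fset1 (negbTE Hax) //.
  rewrite ncmulr0 /nczero mulr0 addr0.
  by have [_ H2] := Hv; rewrite H2 // Hc2 in_fset1.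
have Hev : inM c.1 c.2 (ev k y) by exact: inM_ev.
have Hav : inM c.1 c.2 (act (ncX k x) v') by exact: inM_act.
rewrite {1}Dec Hmlin // -Hact // /vadd /vscale /ncadd /ncscale /act ncmul_nil.
by rewrite (inL_nil (HL _ Xc)) mul0r addr0.
Qed.

Lemma retract_Y (k : fieldType) (a' c : Obj) x y :
  c.1 = [fset x]%fset -> c.2 = [fset y]%fset -> retract k a' c ->
  forall y1 y2, y1 \in a'.2 -> y2 \in a'.2 -> y1 = y2.
Proof.
move=> Hc1 Hc2 [s [r [h [[_ Hcomp] [_ Hid]]]]] y1 y2 H1 H2.
case: (svalP s) => [_ [HMs _ _ _]].
set w := (sval r).2 (ev k y).
have E : forall z, z \in a'.2 -> forall y',
    ev k z y' [::] = ((sval s).2 (ev k z)) y [::] * w y' [::].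
  move=> z Hz y'; have Hez := @inM_ev k a'.1 a'.2 z Hz.
  have e := Hid _ Hez; rewrite Hcomp in e; rewrite -{1}e.
  exact: (@retract_key k a' c x y r Hc1 Hc2 _ (HMs _ Hez) y').
apply/eqP; apply/negPn/negP => Hne.
have e11 := E y1 H1 y1; have e12 := E y1 H1 y2; have e22 := E y2 H2 y2.
move: e11 e12 e22; rewrite /ev /ncone /nczero !eqxx [y2 == y1]eq_sym (negbTE Hne).
move=> e11 /esym /eqP; rewrite mulf_eq0 => /orP [/eqP c0|/eqP w0].
  by move: e11; rewrite c0 mul0r => /eqP; rewrite oner_eq0.
by rewrite w0 mulr0 => /eqP; rewrite oner_eq0.
Qed.

Lemma fset_single (A : {fset nat}) z :
  z \in A -> (forall u v, u \in A -> v \in A -> u = v) -> A = [fset z]%fset.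
Proof.
move=> Hz H; apply/fsetP => u; rewrite in_fset1; apply/idP/eqP => [Hu|->//].
exact: H.
Qed.

Lemma nonempty_or0 (A : {fset nat}) : A = fset0 \/ exists x, x \in A.
Proof. case: (eqVneq A fset0) => [->|/fset0Pn]; by [left|right]. Qed.

Definition Rtype (k : fieldType) a := exists b c, ~ triv k a b /\ ~ triv k a c /\ triv k b c.

Lemma Rtype_nonempty (k : fieldType) a :
  Rtype k a -> (exists x, x \in a.1) /\ (exists y, y \in a.2).
Proof.
move=> [b [c [H1 [H2 H3]]]]; split.
- case: (nonempty_or0 a.1) => [Ha|//]; exfalso.
  case: (nonempty_or0 a.2) => [Ha2|[y0 Hy0]]; first by apply: H1; apply: triv_crit; left.
  case: (nonempty_or0 b.2) => [Hb2|[y1 Hy1]]; first by apply: H1; apply: triv_crit; [left|right].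
  case: (nonempty_or0 c.2) => [Hc2|[y2 Hy2]]; first by apply: H2; apply: triv_crit; [left|right].
  exact: (nontriv_Y Hy1 Hy2 H3).
- case: (nonempty_or0 a.2) => [Ha|//]; exfalso.
  case: (nonempty_or0 a.1) => [Ha1|[y0 Hy0]]; first by apply: H1; apply: triv_crit; left.
  case: (nonempty_or0 b.1) => [Hb1|[y1 Hy1]]; first by apply: H1; apply: triv_crit; [right|left].
  case: (nonempty_or0 c.1) => [Hc1|[y2 Hy2]]; first by apply: H2; apply: triv_crit; [right|left].
  exact: (nontriv_X Hy1 Hy2 H3).
Qed.

Theorem proposition6 (k : fieldType)
    (Hchar : [pchar k] =i pred0)
    (Hinf : forall s : seq k, exists x : k, x \notin s)
    (Fo : Obj -> Obj) (Fm : forall a b, XiHom k a b -> XiHom k (Fo a) (Fo b))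
    (a : Obj) :
  isCatAut Fm -> cyclic a -> cyclic (Fo a).
Proof.
move=> [[g0 Fg0 g0F] bijFm HidF HcompF] [x [y [Ha1 Ha2]]].
have trivT : forall a1 b1, triv k a1 b1 <-> triv k (Fo a1) (Fo b1).
  move=> a1 b1; case: (bijFm a1 b1) => g Fg gF; split.
    by move=> Ht f' g'; rewrite -(gF f') -(gF g') (Ht (g f') (g g')).
  by move=> Ht f1 f2; rewrite -(Fg f1) -(Fg f2) (Ht (Fm _ _ f1) (Fm _ _ f2)).
have RF : forall a1, Rtype k a1 -> Rtype k (Fo a1).
  move=> a1 [b [c [H1 [H2 H3]]]]; exists (Fo b), (Fo c); split; last split.
  - by move/(proj2 (trivT _ _)).
  - by move/(proj2 (trivT _ _)).
  - exact: (proj1 (trivT _ _)).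
have RB : forall a1, Rtype k (Fo a1) -> Rtype k a1.
  move=> a1 [b [c [H1 [H2 H3]]]]; exists (g0 b), (g0 c); split; last split.
  - by move/(proj1 (trivT _ _)); rewrite g0F.
  - by move/(proj1 (trivT _ _)); rewrite g0F.
  - by apply/(proj2 (trivT _ _)); rewrite !g0F.
have retF : forall a1 b1, retract k a1 b1 -> retract k (Fo a1) (Fo b1).
  move=> a1 b1 [s [r [h [Hc Hi]]]].
  exists (Fm _ _ s), (Fm _ _ r), (Fm _ _ h); split; [exact: HcompF | exact: HidF].
have Hx : x \in a.1 by rewrite Ha1 in_fset1.
have Hy : y \in a.2 by rewrite Ha2 in_fset1.
have Ra : Rtype k a.
  exists (a.1, fset0), (fset0, a.2); split; last split.
  - exact: (nontriv_X (a := a) (b := (a.1, fset0)) Hx Hx).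
  - exact: (nontriv_Y (a := a) (b := (fset0, a.2)) Hy Hy).
  - by apply: triv_crit; [right|left].
have Rb0 : Rtype k (g0 a) by apply: RB; rewrite g0F.
have [[x0 Hx0] [y0 Hy0]] := Rtype_nonempty Rb0.
have Hret : retract k (Fo a) a.
  by rewrite -{2}(g0F a); apply: retF; exact: (@cyc_retract k a (g0 a) x y x0 y0 Ha1 Ha2 Hx0 Hy0).
have [[x' Hx'] [y' Hy']] := Rtype_nonempty (RF _ Ra).
exists x', y'; split; apply: fset_single => //.
- exact: (retract_X Ha1 Hret).
- exact: (retract_Y Ha1 Ha2 Hret).
Qed.
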